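(* Under the setting described in the context, each of the operators $F$, $F_h^+$ and $\hat F_h^+$ admits a distance-like additive eigenvector: there exist $\lambda\in\mathbb{R}$ and a distance-like $v\in\operatorname{Lip}_1(X)$ with $Fv=\lambda+v$; similarly for $F_h^+$ on $\operatorname{Lip}_1(X)$ and for $\hat F_h^+$ on $\operatorname{Lip}_1(X_h)$.
   Context: Let $C\subset\mathbb{R}^n$ be a pointed closed convex cone, $C^*$ its dual cone, $e^*\in\operatorname{int}C^*$, and $\Delta=\{x\in C:\langle x,e^*\rangle=1\}$. $x\le_C y$ means $y-x\in C$; the Funk hemi-metric on $\operatorname{Int}C$ is $\operatorname{Funk}(x,y)=\log\inf\{\lambda>0:x\le_C\lambda y\}$ and Hilbert's metric is $\operatorname{Hil}(x,y)=\operatorname{Funk}(x,y)+\operatorname{Funk}(y,x)$. Let $\mathcal{A},\mathcal{B}$ be nonempty compact action sets and $(T_{ab})_{(a,b)\in\mathcal{A}\times\mathcal{B}}$ self-maps of $\operatorname{Int}C$ that are nonexpansive for $\operatorname{Funk}$, such that for each $x$ the maps $a\mapsto T_{ab}(x)$, $b\mapsto T_{ab}(x)$ are continuous and for each compact $K$ the set $\{T_{ab}(x):(a,b,x)\in\mathcal{A}\times\mathcal{B}\times K\}$ is compact, and each $T_{ab}$ extends continuously to $C$. Small cone assumption: there is a closed cone $K\subset C$ with $T_{ab}(K)\subset K$ for all $a,b$ and $X:=K\cap\Delta\subset\operatorname{relint}\Delta$. For $h>0$, $X_h\subset X$ is a finite set with $X\subset\bigcup_{y\in X_h}\{x:\operatorname{Hil}(x,y)<h\}$.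 For $Y\subset\operatorname{Int}C$, $\operatorname{Lip}_1(Y)$ is the set of $f:Y\to\mathbb{R}$ with $f(x)-f(y)\le\operatorname{Funk}(x,y)$ on $Y$. Define $F:\operatorname{Lip}_1(X)\to\operatorname{Lip}_1(X)$ by $Fv(x)=\inf_{a\in\mathcal{A}}\sup_{b\in\mathcal{B}}\big[\log\langle T_{ab}(x),e^*\rangle+v\big(T_{ab}(x)/\langle T_{ab}(x),e^*\rangle\big)\big]$; $I_h^+:\mathbb{R}^{X_h}\to\mathbb{R}^X$, $I_h^+v(x)=\min_{y\in X_h}[v(y)+\operatorname{Funk}(x,y)]$; $R_h:\mathbb{R}^X\to\mathbb{R}^{X_h}$ the restriction; $F_h^+=FI_h^+R_h$ on $\operatorname{Lip}_1(X)$ and $\hat F_h^+=R_hFI_h^+$ on $\operatorname{Lip}_1(X_h)$. A function $v\in\operatorname{Lip}_1(Y)$ is distance-like if $v(x)\ge\alpha+\operatorname{Funk}(x,x_1)$ for all $x\in Y$, for some $x_1\in Y$, $\alpha\in\mathbb{R}$. *)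

(* Defs.v *)
From mathcomp Require Import all_boot all_order all_algebra.
From mathcomp Require Import all_classical all_reals all_analysis.
Import Order.TTheory GRing.Theory Num.Theory.
Import numFieldNormedType.Exports.

Set Implicit Arguments.
Unset Strict Implicit.
Unset Printing Implicit Defensive.

Local Open Scope classical_set_scope.
Local Open Scope ring_scope.

Section Defs.
Variables (R : realType) (n : nat).
Local Notation V := 'rV[R]_n.

Definition dotp (x y : V) : R := \sum_(i < n) x ord0 i * y ord0 i.

Definition is_convex_cone (C : set V) : Prop :=
  [/\ C 0, (forall x y, C x -> C y -> C (x + y))
     & (forall (t : R) x, 0 <= t -> C x -> C (t *: x))].

Definition is_cone (K : set V) : Prop :=
  K 0 /\ forall (t : R) x, 0 <= t -> K x -> K (t *: x).

Definition pointed (C : set V) : Prop :=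
  forall x, C x -> C (- x) -> x = 0.

Definition dual_cone (C : set V) : set V :=
  [set phi | forall x, C x -> 0 <= dotp x phi].

Definition simplex (C : set V) (e : V) : set V :=
  [set x | C x /\ dotp x e = 1].

Definition affine_set (A : set V) : Prop :=
  forall x y (t : R), A x -> A y -> A (x + t *: (y - x)).

Definition aff_hull (S : set V) : set V :=
  [set x | forall A, affine_set A -> S `<=` A -> A x].

Definition relint (S : set V) : set V :=
  [set x | S x /\ exists2 eps : R, 0 < eps &
             forall y, aff_hull S y -> ball x eps y -> S y].

Definition Funk (C : set V) (x y : V) : R :=
  ln (inf [set l : R | 0 < l /\ C (l *: y - x)]).

Definition Hil (C : set V) (x y : V) : R := Funk C x y + Funk C y x.

Definition Lip1 (C : set V) (Y : set V) (f : V -> R) : Prop :=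
  forall x y, Y x -> Y y -> f x - f y <= Funk C x y.

Definition distance_like (C : set V) (Y : set V) (f : V -> R) : Prop :=
  exists2 x1, Y x1 & exists alpha : R,
    forall x, Y x -> alpha + Funk C x x1 <= f x.

Definition Fop (TA TB : Type) (Aset : set TA) (Bset : set TB)
    (T : TA -> TB -> V -> V) (e : V) (v : V -> R) (x : V) : R :=
  inf [set sup [set ln (dotp (T a b x) e)
                    + v ((dotp (T a b x) e)^-1 *: T a b x) | b in Bset]
      | a in Aset].

Definition Iplus (C : set V) (Xh : set V) (v : V -> R) (x : V) : R :=
  inf [set v y + Funk C x y | y in Xh].

End Defs.

(* Main.v *)
Require Import Defs.
From mathcomp Require Import all_boot all_order all_algebra.
From mathcomp Require Import all_classical all_reals all_analysis.
From mathcomp Require Import ring lra.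
Import Order.TTheory GRing.Theory Num.Theory.
Import numFieldNormedType.Exports.
Local Open Scope classical_set_scope.
Local Open Scope ring_scope.
Set Implicit Arguments.
Unset Strict Implicit.
Unset Printing Implicit Defensive.

Section SupInf.
Variable R : realType.

Lemma sup_img_ub (I : Type) (S : set I) (g : I -> R) M :
  (forall i, S i -> g i <= M) -> forall i, S i -> g i <= sup (g @` S).
Proof.
move=> hM i Si; apply: ub_le_sup; last by exists i.
by exists M => _ [j Sj <-]; exact: hM.
Qed.

Lemma sup_img_le (I : Type) (S : set I) (g : I -> R) M :
  S !=set0 -> (forall i, S i -> g i <= M) -> sup (g @` S) <= M.
Proof.
move=> [i0 Si0] hM; apply: ge_sup; first by exists (g i0), i0.
by move=> _ [j Sj <-]; exact: hM.
Qed.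

Lemma inf_img_lb (I : Type) (S : set I) (g : I -> R) M :
  (forall i, S i -> M <= g i) -> forall i, S i -> inf (g @` S) <= g i.
Proof.
move=> hM i Si; apply: ge_inf; last by exists i.
by exists M => _ [j Sj <-]; exact: hM.
Qed.

Lemma inf_img_ge (I : Type) (S : set I) (g : I -> R) M :
  S !=set0 -> (forall i, S i -> M <= g i) -> M <= inf (g @` S).
Proof.
move=> [i0 Si0] hM; apply: lb_le_inf; first by exists (g i0), i0.
by move=> _ [j Sj <-]; exact: hM.
Qed.

Lemma sup_img_adh (I : Type) (S : set I) (g : I -> R) M eps :
  S !=set0 -> (forall i, S i -> g i <= M) -> 0 < eps ->
  exists2 i, S i & sup (g @` S) - eps < g i.
Proof.
move=> [i0 Si0] hM he.
have hs : has_sup (g @` S).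
  split; first by exists (g i0), i0.
  by exists M => _ [j Sj <-]; exact: hM.
have [_ [i Si <-] h] := sup_adherent he hs.
by exists i.
Qed.

Lemma inf_img_adh (I : Type) (S : set I) (g : I -> R) M eps :
  S !=set0 -> (forall i, S i -> M <= g i) -> 0 < eps ->
  exists2 i, S i & g i < inf (g @` S) + eps.
Proof.
move=> [i0 Si0] hM he.
have hi : has_inf (g @` S).
  split; first by exists (g i0), i0.
  by exists M => _ [j Sj <-]; exact: hM.
have [_ [i Si <-] h] := inf_adherent he hi.
by exists i.
Qed.

Lemma infsup_le (TA TB : Type) (A : set TA) (B : set TB) (g1 g2 : TA -> TB -> R) c
  L1 U1 L2 U2 :
  A !=set0 -> B !=set0 ->
  (forall a b, A a -> B b -> L1 <= g1 a b <= U1) ->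
  (forall a b, A a -> B b -> L2 <= g2 a b <= U2) ->
  (forall a b, A a -> B b -> g1 a b <= g2 a b + c) ->
  inf [set sup [set g1 a b | b in B] | a in A] <=
  inf [set sup [set g2 a b | b in B] | a in A] + c.
Proof.
move=> A0 B0 h1 h2 hc.
have [b0 Bb0] := B0.
have s1ub : forall a, A a -> sup [set g1 a b | b in B] <= sup [set g2 a b | b in B] + c.
  move=> a Aa; apply: sup_img_le => // b Bb.
  apply: (le_trans (hc a b Aa Bb)); rewrite lerD2r.
  apply: (@sup_img_ub _ _ _ U2) => // j Bj.
  by have /andP[] := h2 a j Aa Bj.
have s1lb : forall a, A a -> L1 <= sup [set g1 a b | b in B].
  move=> a Aa; apply: le_trans (_ : g1 a b0 <= _).
    by have /andP[] := h1 a b0 Aa Bb0.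
  apply: (@sup_img_ub _ _ _ U1) => // j Bj.
  by have /andP[] := h1 a j Aa Bj.
rewrite -lerBlDr; apply: inf_img_ge => // a Aa.
rewrite lerBlDr; apply: le_trans (s1ub a Aa).
exact: (@inf_img_lb _ _ _ L1).
Qed.

End SupInf.

Section Op.
Variables (R : realType) (T : Type) (Y : set T) (d : T -> T -> R).
Hypothesis d_ge0 : forall x y, Y x -> Y y -> 0 <= d x y.

Definition Lipd (f : T -> R) := forall x y, Y x -> Y y -> f x - f y <= d x y.

Lemma lip_cst c : Lipd (fun _ => c).
Proof. by move=> x y Yx Yy; rewrite subrr; exact: d_ge0. Qed.

Lemma lip_shift f c : Lipd f -> Lipd (fun z => f z + c).
Proof. by move=> hf x y Yx Yy; have := hf x y Yx Yy; lra. Qed.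

Lemma lip_supfam (I : Type) (S : set I) (f : I -> T -> R) :
  S !=set0 -> (forall i, S i -> Lipd (f i)) ->
  (forall x, Y x -> exists M, forall i, S i -> f i x <= M) ->
  Lipd (fun x => sup ((fun i => f i x) @` S)).
Proof.
move=> S0 hf hb x y Yx Yy; rewrite lerBlDr.
apply: sup_img_le => // i Si.
have [M hM] := hb y Yy.
have := hf i Si x y Yx Yy.
have := @sup_img_ub R I S (fun i => f i y) M hM i Si.
move=> /= h1 h2; lra.
Qed.

Lemma lip_inffam (I : Type) (S : set I) (f : I -> T -> R) :
  S !=set0 -> (forall i, S i -> Lipd (f i)) ->
  (forall x, Y x -> exists M, forall i, S i -> M <= f i x) ->
  Lipd (fun x => inf ((fun i => f i x) @` S)).
Proof.
move=> S0 hf hb x y Yx Yy; rewrite lerBlDr addrC -lerBlDr.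
apply: inf_img_ge => // i Si.
have [M hM] := hb x Yx.
have := hf i Si x y Yx Yy.
have := @inf_img_lb R I S (fun i => f i x) M hM i Si.
move=> /= h1 h2; lra.
Qed.

Variable G : (T -> R) -> (T -> R).
Hypothesis hG1 : forall f, Lipd f -> Lipd (G f).
Hypothesis hG2 : forall f g, Lipd f -> Lipd g -> (forall x, Y x -> f x <= g x) ->
  forall x, Y x -> G f x <= G g x.
Hypothesis hG3 : forall f c, Lipd f -> forall x, Y x -> G (fun z => f z + c) x = G f x + c.

Lemma Gext f g : Lipd f -> Lipd g -> (forall x, Y x -> f x = g x) ->
  forall x, Y x -> G f x = G g x.
Proof.
move=> hf hg e x Yx; apply/le_anti/andP; split; apply: hG2 => // y Yy; by rewrite e.
Qed.

Lemma it_lip k f : Lipd f -> Lipd (iter k G f).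
Proof. by move=> hf; elim: k => //= k IH; exact: hG1. Qed.

Lemma it_mono k f g : Lipd f -> Lipd g -> (forall x, Y x -> f x <= g x) ->
  forall x, Y x -> iter k G f x <= iter k G g x.
Proof.
move=> hf hg hfg; elim: k => //= k IH x Yx.
by apply: hG2 => //; exact: it_lip.
Qed.

Lemma it_shift k f c : Lipd f -> forall x, Y x ->
  iter k G (fun z => f z + c) x = iter k G f x + c.
Proof.
move=> hf; elim: k => //= k IH x Yx.
rewrite -hG3 //; last exact: it_lip.
apply: Gext => //; first by apply: it_lip; exact: lip_shift.
by apply: lip_shift; exact: it_lip.
Qed.

End Op.

Lemma fin_choice_nat (P : nat -> nat -> Prop) m :
  (forall i j j', (j <= j')%N -> P i j -> P i j') ->
  (forall i, (i < m)%N -> exists j, P i j) -> exists J, forall i, (i < m)%N -> P i J.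
Proof.
move=> hmono; elim: m => [|m IH] h; first by exists 0%N.
have [J HJ] : exists J, forall i, (i < m)%N -> P i J.
  by apply: IH => i lim; apply: h; exact: ltnW.
have [j Hj] := h m (ltnSn m).
exists (maxn J j) => i; rewrite ltnS leq_eqVlt => /orP[/eqP->|lim].
  by apply: hmono Hj; exact: leq_maxr.
by apply: hmono (HJ i lim); exact: leq_maxl.
Qed.

Section Fix.
Variables (R : realType) (T : Type) (Y : set T) (d : T -> T -> R).
Hypothesis d_ge0 : forall x y, Y x -> Y y -> 0 <= d x y.
Hypothesis net : forall eps : R, 0 < eps -> exists (m : nat) (p : nat -> T),
  (forall i, (i < m)%N -> Y (p i)) /\
  (forall x, Y x -> exists2 i, (i < m)%N & d x (p i) <= eps /\ d (p i) x <= eps).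
Variable H : (T -> R) -> (T -> R).
Local Notation Lip := (Lipd Y d).
Hypothesis hH1 : forall f, Lip f -> Lip (H f).
Hypothesis hH2 : forall f g, Lip f -> Lip g -> (forall x, Y x -> f x <= g x) ->
  forall x, Y x -> H f x <= H g x.
Hypothesis hH3 : forall f c, Lip f -> forall x, Y x -> H (fun z => f z + c) x = H f x + c.
Variable B : R.
Hypothesis hB : forall k x, Y x -> - B <= iter k H (fun _ => 0) x <= B.

Lemma unif (A1 B1 : nat -> T -> R) :
  (forall j, Lip (A1 j)) -> (forall j, Lip (B1 j)) ->
  (forall x, Y x -> forall eps, 0 < eps -> exists j0, forall j, (j0 <= j)%N -> A1 j x <= B1 j x + eps) ->
  forall eps, 0 < eps -> exists j0, forall j, (j0 <= j)%N -> forall x, Y x -> A1 j x <= B1 j x + 3 * eps.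
Proof.
move=> hA hB1 hpt eps he.
have [m [p [Yp hp]]] := net he.
have [J HJ] := @fin_choice_nat (fun i j0 => forall j, (j0 <= j)%N -> A1 j (p i) <= B1 j (p i) + eps) m
  (fun i j j' jj' h k jk => h k (leq_trans jj' jk))
  (fun i im => hpt (p i) (Yp i im) eps he).
exists J => j Jj x Yx.
have [i im [d1 d2]] := hp x Yx.
have := HJ i im j Jj.
have := hA j x (p i) Yx (Yp i im).
have := hB1 j (p i) x (Yp i im) Yx.
lra.
Qed.

Let w k := iter k H (fun _ => 0).
Let lipw k : Lip (w k).
Proof. apply: it_lip => //; exact: lip_cst. Qed.

Let W j x := sup ((fun k => w (j + k)%N x) @` setT).
Let s x := inf ((fun j => W j x) @` setT).

Let Wb j x : Y x -> - B <= W j x <= B.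
Proof.
move=> Yx; apply/andP; split.
  apply: le_trans (_ : w (j + 0)%N x <= _); first by have /andP[] := hB (j + 0)%N Yx.
  apply: (@sup_img_ub _ _ _ (fun k => w (j + k)%N x) B) => // k _; by have /andP[] := hB (j + k)%N Yx.
apply: sup_img_le; first by exists 0%N.
by move=> k _; have /andP[] := hB (j + k)%N Yx.
Qed.

Let lipW j : Lip (W j).
Proof.
apply: lip_supfam => //; try (by exists 0%N).
by move=> x Yx; exists B => k _; have /andP[] := hB (j + k)%N Yx.
Qed.

Let sb x : Y x -> - B <= s x <= B.
Proof.
move=> Yx; apply/andP; split.
  apply: inf_img_ge; first by exists 0%N.
  by move=> j _; have /andP[] := Wb j Yx.
apply: le_trans (_ : W 0%N x <= _); last by have /andP[] := Wb 0%N Yx.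
apply: (@inf_img_lb _ _ _ (fun j => W j x) (- B)) => // j _; by have /andP[] := Wb j Yx.
Qed.

Let lips : Lip s.
Proof.
apply: lip_inffam => //; try (by exists 0%N).
by move=> x Yx; exists (- B) => j _; have /andP[] := Wb j Yx.
Qed.

Let Wdec i j x : (i <= j)%N -> Y x -> W j x <= W i x.
Proof.
move=> ij Yx; apply: sup_img_le; first by exists 0%N.
move=> k _; have -> : (j + k = i + (j - i + k))%N by rewrite addnA subnKC.
by apply: (@sup_img_ub _ _ _ (fun l => w (i + l)%N x) B) => // l _; have /andP[] := hB (i + l)%N Yx.
Qed.

Let WH j x : Y x -> W j.+1 x <= H (W j) x.
Proof.
move=> Yx; apply: sup_img_le; first by exists 0%N.
move=> k _; rewrite addSn /w iterS.
apply: hH2; [exact: lipw | exact: lipW | move=> y Yy | exact: Yx].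
by apply: (@sup_img_ub _ _ _ (fun l => w (j + l)%N y) B) => // l _; have /andP[] := hB (j + l)%N Yy.
Qed.

Let s_sub x : Y x -> s x <= H s x.
Proof.
move=> Yx; apply/ler_addgt0Pr => e e0.
have e3 : 0 < e / 3 by rewrite divr_gt0.
have hpt : forall y, Y y -> forall eps, 0 < eps -> exists j0, forall j, (j0 <= j)%N -> W j y <= s y + eps.
  move=> y Yy eps he.
  have [j0 _ hj] := @inf_img_adh R nat setT (fun j => W j y) (- B) eps (ex_intro _ 0%N I)
     (fun j _ => proj1 (andP (Wb j Yy))) he.
  exists j0 => j jj; apply: le_trans (Wdec jj Yy) _; exact: ltW.
have [j0 hj0] := @unif W (fun _ => s) lipW (fun=> lips) hpt (e / 3) e3.
have h1 : s x <= W j0.+1 x.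
  by apply: (@inf_img_lb _ _ _ (fun j => W j x) (- B)) => // j _; have /andP[] := Wb j Yx.
have h2 := WH j0 Yx.
have h3 : H (W j0) x <= H (fun z => s z + 3 * (e / 3)) x.
  apply: hH2; [exact: lipW | apply: lip_shift; exact: lips | move=> y Yy; exact: hj0 | exact: Yx].
rewrite hH3 // in h3.
have -> : e = 3 * (e / 3) by field.
lra.
Qed.

Let z k := iter k H s.
Let lipz k : Lip (z k).
Proof. exact: it_lip. Qed.

Let zinc k x : Y x -> z k x <= z k.+1 x.
Proof.
elim: k x => [|k IH] x Yx; first exact: s_sub.
rewrite /z !iterS; apply: hH2; [exact: (lipz k) | exact: (lipz k.+1) | exact: IH | exact: Yx].
Qed.

Let zmono k l x : (k <= l)%N -> Y x -> z k x <= z l x.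
Proof.
move=> kl Yx; rewrite -(subnKC kl); elim: (l - k)%N => [|m IH]; first by rewrite addn0.
by apply: le_trans IH _; rewrite addnS; exact: zinc.
Qed.

Let zb k x : Y x -> z k x <= B + B.
Proof.
move=> Yx.
have h : forall y, Y y -> s y <= (fun z => (fun _ : T => (0:R)) z + B) y.
  by move=> y Yy; rewrite add0r; have /andP[] := sb Yy.
have := @it_mono R T Y d H hH1 hH2 k s _ lips (lip_shift B (lip_cst d_ge0 0)) h x Yx.
rewrite (@it_shift R T Y d H hH1 hH2 hH3 k (fun _ => 0) B (lip_cst d_ge0 0) x Yx).
by have /andP[_ ?] := hB k Yx; rewrite /z; lra.
Qed.

Let zl x := sup ((fun k => z k x) @` setT).

Let lipzl : Lip zl.
Proof.
apply: lip_supfam => //; try (by exists 0%N).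
by move=> x Yx; exists (B + B) => k _; exact: zb.
Qed.

Let zl_ge k x : Y x -> z k x <= zl x.
Proof. by move=> Yx; apply: (@sup_img_ub _ _ _ (fun l => z l x) (B + B)) => // l _; exact: zb. Qed.

Lemma fix_exists : exists v, Lip v /\ forall x, Y x -> H v x = v x.
Proof.
exists zl; split => // x Yx; apply/le_anti/andP; split; last first.
  apply: sup_img_le; first by exists 0%N.
  move=> k _; apply: le_trans (zinc k Yx) _.
  rewrite /z iterS; apply: hH2; [exact: (lipz k) | exact: lipzl | move=> y Yy; exact: zl_ge | exact: Yx].
apply/ler_addgt0Pr => e e0.
have e3 : 0 < e / 3 by rewrite divr_gt0.
have hpt : forall y, Y y -> forall eps, 0 < eps -> exists k0, forall k, (k0 <= k)%N -> zl y <= z k y + eps.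
  move=> y Yy eps he.
  have [k0 _ hk] := @sup_img_adh R nat setT (fun k => z k y) (B + B) eps (ex_intro _ 0%N I)
     (fun k _ => zb k Yy) he.
  exists k0 => k kk; have := zmono kk Yy; rewrite /zl; move: hk => /= hk; lra.
have [k0 hk0] := @unif (fun _ => zl) z (fun=> lipzl) lipz hpt (e / 3) e3.
have h3 : H zl x <= H (fun y => z k0 y + 3 * (e / 3)) x.
  apply: hH2; [exact: lipzl | apply: lip_shift; exact: lipz | move=> y Yy; exact: hk0 | exact: Yx].
rewrite hH3 // in h3.
have h4 := zl_ge k0.+1 Yx.
rewrite /z iterS in h4.
have -> : e = 3 * (e / 3) by field.
lra.
Qed.

End Fix.

Section Eigen.
Variables (R : realType) (T : Type) (Y : set T) (d : T -> T -> R) (D : R) (y0 : T).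
Hypothesis Yy0 : Y y0.
Hypothesis d_ge0 : forall x y, Y x -> Y y -> 0 <= d x y.
Hypothesis d_leD : forall x y, Y x -> Y y -> d x y <= D.
Hypothesis net : forall eps : R, 0 < eps -> exists (m : nat) (p : nat -> T),
  (forall i, (i < m)%N -> Y (p i)) /\
  (forall x, Y x -> exists2 i, (i < m)%N & d x (p i) <= eps /\ d (p i) x <= eps).
Variable G : (T -> R) -> (T -> R).
Local Notation Lip := (Lipd Y d).
Hypothesis hG1 : forall f, Lip f -> Lip (G f).
Hypothesis hG2 : forall f g, Lip f -> Lip g -> (forall x, Y x -> f x <= g x) ->
  forall x, Y x -> G f x <= G g x.
Hypothesis hG3 : forall f c, Lip f -> forall x, Y x -> G (fun z => f z + c) x = G f x + c.

Lemma lip_bnd f x : Lip f -> Y x -> f y0 - D <= f x <= f y0 + D.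
Proof.
move=> hf Yx; have := hf x y0 Yx Yy0; have := hf y0 x Yy0 Yx.
have := d_leD Yx Yy0; have := d_leD Yy0 Yx.
move=> *; apply/andP; split; lra.
Qed.

Let D0 : 0 <= D.
Proof. exact: le_trans (d_ge0 Yy0 Yy0) (d_leD Yy0 Yy0). Qed.

Let u k := iter k G (fun _ => 0).
Let lipu k : Lip (u k).
Proof. apply: it_lip => //; exact: lip_cst. Qed.
Let a k := u k y0.

Let a_sub k l : a (k + l)%N <= a k + a l + D.
Proof.
rewrite /a /u iterD.
have h : forall y, Y y -> u l y <= (fun z => (fun _ : T => (0:R)) z + (a l + D)) y.
  by move=> y Yy; rewrite add0r; have /andP[] := lip_bnd (lipu l) Yy.
have := @it_mono R T Y d G hG1 hG2 k (u l) _ (lipu l) (lip_shift (a l + D) (lip_cst d_ge0 0)) h y0 Yy0.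
rewrite (@it_shift R T Y d G hG1 hG2 hG3 k (fun _ => 0) _ (lip_cst d_ge0 0) y0 Yy0).
rewrite /a /u; lra.
Qed.

Let a_sup k l : a k + a l - D <= a (k + l)%N.
Proof.
rewrite /a /u iterD.
have h : forall y, Y y -> (fun z => (fun _ : T => (0:R)) z + (a l - D)) y <= u l y.
  by move=> y Yy; rewrite add0r; have /andP[] := lip_bnd (lipu l) Yy.
have := @it_mono R T Y d G hG1 hG2 k _ (u l) (lip_shift (a l - D) (lip_cst d_ge0 0)) (lipu l) h y0 Yy0.
rewrite (@it_shift R T Y d G hG1 hG2 hG3 k (fun _ => 0) _ (lip_cst d_ge0 0) y0 Yy0).
rewrite /a /u; lra.
Qed.

Let b k := a k + D.
Let c k := a k - D.

Let b_sub k l : b (k + l)%N <= b k + b l.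
Proof. by have := a_sub k l; rewrite /b; lra. Qed.

Let c_sup k l : c k + c l <= c (k + l)%N.
Proof. by have := a_sup k l; rewrite /c; lra. Qed.

Let b_mul j k : b (k.+1 * j)%N <= k.+1%:R * b j.
Proof.
elim: k => [|k IH]; first by rewrite mul1n mul1r.
rewrite mulSn -natr1 mulrDl mul1r addrC.
by apply: le_trans (b_sub _ _) _; exact: lerD (lexx _) IH.
Qed.

Let c_mul j k : k.+1%:R * c j <= c (k.+1 * j)%N.
Proof.
elim: k => [|k IH]; first by rewrite mul1n mul1r.
rewrite mulSn -natr1 mulrDl mul1r addrC.
by apply: le_trans _ (c_sup _ _); exact: lerD (lexx _) IH.
Qed.

Let cb j k : j.+1%:R * c k.+1 <= k.+1%:R * b j.+1.
Proof.
apply: le_trans (c_mul k.+1 j) _.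
apply: le_trans (_ : b (j.+1 * k.+1)%N <= _); first by have := D0; rewrite /b /c; lra.
by rewrite mulnC; exact: b_mul.
Qed.

Let cb' j k : c k.+1 / k.+1%:R <= b j.+1 / j.+1%:R.
Proof.
by rewrite ler_pdivlMr // mulrAC ler_pdivrMr // mulrC [X in _ <= X]mulrC cb.
Qed.

Let lam := inf ((fun j => b j.+1 / j.+1%:R) @` setT).

Let lam_le k : k%:R * lam <= b k.
Proof.
case: k => [|k]; first by have := D0; rewrite mul0r /b /a /u /=; lra.
rewrite -ler_pdivlMl //.
have := @inf_img_lb R nat setT (fun j => b j.+1 / j.+1%:R) (c 1 / 1%:R) (fun j _ => cb' j 0) k I.
by rewrite mulrC.
Qed.

Let lam_ge k : c k <= k%:R * lam.
Proof.
case: k => [|k]; first by have := D0; rewrite mul0r /c /a /u /=; lra.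
rewrite -ler_pdivrMl // mulrC.
by apply: inf_img_ge; [exists 0%N | move=> j _; exact: cb'].
Qed.

Let H f := fun x => G f x - lam.

Let hH1 f : Lip f -> Lip (H f).
Proof. by move=> hf; apply: lip_shift; exact: hG1. Qed.
Let hH2 f g : Lip f -> Lip g -> (forall x, Y x -> f x <= g x) ->
  forall x, Y x -> H f x <= H g x.
Proof. by move=> hf hg hfg x Yx; rewrite /H lerD2r; exact: hG2. Qed.
Let hH3 f c0 : Lip f -> forall x, Y x -> H (fun z => f z + c0) x = H f x + c0.
Proof. by move=> hf x Yx; rewrite /H hG3 //; ring. Qed.

Let itH k x : Y x -> iter k H (fun _ => 0) x = u k x - k%:R * lam.
Proof.
elim: k x => [|k IH] x Yx; first by rewrite /u /= mul0r subr0.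
rewrite iterS /H /u iterS.
have -> : G (iter k H (fun=> 0)) x = G (fun z => u k z + - (k%:R * lam)) x.
  apply: (Gext hG2) => //.
  - by apply: it_lip => //; exact: lip_cst.
  - by apply: lip_shift; exact: lipu.
rewrite hG3 //; rewrite -natr1 /u; ring.
Qed.

Lemma eigen_exists : exists (l : R) v, Lip v /\ forall x, Y x -> G v x = l + v x.
Proof.
have hB : forall k x, Y x -> - (D + D) <= iter k H (fun _ => 0) x <= D + D.
  move=> k x Yx; rewrite itH //.
  have := lip_bnd (lipu k) Yx; have := lam_le k; have := lam_ge k.
  rewrite /b /c /a => h1 h2 /andP[h3 h4]; apply/andP; split; lra.
have [v [lv hv]] := @fix_exists R T Y d d_ge0 net H hH1 hH2 hH3 (D + D) hB.
exists lam, v; split => // x Yx; have := hv x Yx; rewrite /H; lra.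
Qed.

End Eigen.

Section Cone.
Variables (R : realType) (n : nat).
Local Notation V := 'rV[R]_n.

Lemma dotpD (x y z : V) : dotp (x + y) z = dotp x z + dotp y z.
Proof. by rewrite /dotp -big_split; apply: eq_bigr => i _; rewrite !mxE mulrDl. Qed.
Lemma dotpZ a (x z : V) : dotp (a *: x) z = a * dotp x z.
Proof. by rewrite /dotp mulr_sumr; apply: eq_bigr => i _; rewrite !mxE mulrA. Qed.
Lemma dotpN (x z : V) : dotp (- x) z = - dotp x z.
Proof. by rewrite -scaleN1r dotpZ mulN1r. Qed.
Lemma dotpB (x y z : V) : dotp (x - y) z = dotp x z - dotp y z.
Proof. by rewrite dotpD dotpN. Qed.
Lemma dotp0 (z : V) : dotp 0 z = 0.
Proof. by rewrite /dotp big1 // => i _; rewrite mxE mul0r. Qed.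

Variables (C : set V) (e : V).
Hypothesis Ccone : is_convex_cone C.
Hypothesis eC : dual_cone C e.

Lemma C0 : C 0. Proof. by case: Ccone. Qed.
Lemma CD x y : C x -> C y -> C (x + y). Proof. by case: Ccone => _ h _; exact: h. Qed.
Lemma CZ t x : 0 <= t -> C x -> C (t *: x). Proof. by case: Ccone => _ _ h; exact: h. Qed.

Definition Sf (x y : V) := [set l : R | 0 < l /\ C (l *: y - x)].
Lemma FunkE x y : Funk C x y = ln (inf (Sf x y)). Proof. by []. Qed.

Local Notation Del := (simplex C e).

Lemma S_ge1 x y l : Del x -> Del y -> Sf x y l -> 1 <= l.
Proof.
move=> [_ ex] [_ ey] [l0 Cl]; have := eC Cl.
by rewrite dotpB dotpZ ex ey mulr1 subr_ge0.
Qed.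

Lemma infS_ge1 x y : Del x -> Del y -> Sf x y !=set0 -> 1 <= inf (Sf x y).
Proof. by move=> Dx Dy S0; apply: lb_le_inf => // l; exact: S_ge1. Qed.

Lemma infS_le x y l : Sf x y l -> inf (Sf x y) <= l.
Proof. by move=> Sl; apply: ge_inf => //; exists 0 => k [k0 _]; exact: ltW. Qed.

Lemma Funk_ge0 x y : Del x -> Del y -> 0 <= Funk C x y.
Proof.
move=> Dx Dy; rewrite FunkE.
have [S0|S0] := pselect (Sf x y !=set0).
  exact/ln_ge0/infS_ge1.
have -> : Sf x y = set0.
  by apply/seteqP; split => // l Sl; exfalso; apply: S0; exists l.
by rewrite inf0 ln0.
Qed.

Lemma Funk_le x y l : Del x -> Del y -> Sf x y l -> Funk C x y <= ln l.
Proof.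
move=> Dx Dy Sl; rewrite FunkE.
have h1 := infS_ge1 Dx Dy (ex_intro _ l Sl).
have h2 := S_ge1 Dx Dy Sl.
rewrite ler_ln ?posrE ?(lt_le_trans ltr01) //; exact: infS_le.
Qed.

Lemma Funk_xx x : Del x -> Funk C x x = 0.
Proof.
move=> Dx; apply/le_anti/andP; split; last exact: Funk_ge0.
rewrite -ln1; apply: Funk_le => //; split => //; rewrite scale1r subrr; exact: C0.
Qed.

Lemma Funk_tri x y z : Del x -> Del y -> Del z -> Sf x y !=set0 -> Sf y z !=set0 ->
  Funk C x z <= Funk C x y + Funk C y z.
Proof.
move=> Dx Dy Dz Sxy Syz.
have hprod : forall l1 l2, Sf x y l1 -> Sf y z l2 -> Sf x z (l1 * l2).
  move=> l1 l2 [l10 C1] [l20 C2]; split; first exact: mulr_gt0.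
  have -> : (l1 * l2) *: z - x = l1 *: (l2 *: z - y) + (l1 *: y - x).
    by apply/rowP => i; rewrite !mxE; ring.
  by apply: CD => //; apply: CZ => //; exact: ltW.
have [l1 S1] := Sxy; have [l2 S2] := Syz.
have Sxz : Sf x z !=set0 by exists (l1 * l2); exact: hprod.
set A := inf (Sf x y); set B := inf (Sf y z); set I := inf (Sf x z).
have A1 : 1 <= A by exact: infS_ge1.
have B1 : 1 <= B by exact: infS_ge1.
have I1 : 1 <= I by exact: infS_ge1.
have A0 : 0 < A by exact: lt_le_trans ltr01 A1.
have B0 : 0 < B by exact: lt_le_trans ltr01 B1.
have I0 : 0 < I by exact: lt_le_trans ltr01 I1.
have key : I <= A * B.
  have h1 : forall m2, Sf y z m2 -> I / m2 <= A.
    move=> m2 Sm2; have m20 : 0 < m2 by case: Sm2.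
    apply: lb_le_inf => // m1 Sm1.
    by rewrite ler_pdivrMr // mulrC; apply: infS_le; rewrite mulrC; exact: hprod.
  have h2 : I / A <= B.
    apply: lb_le_inf => // m2 Sm2; have m20 : 0 < m2 by case: Sm2.
    rewrite ler_pdivrMr // mulrC -ler_pdivrMr //; exact: h1.
  by rewrite -ler_pdivrMl // mulrC.
rewrite !FunkE -/A -/B -/I -lnM ?posrE //.
by rewrite ler_ln ?posrE ?mulr_gt0.
Qed.

Lemma Funk_scale p q (al be : R) : Del p -> Del q -> Sf p q !=set0 -> 0 < al -> 0 < be ->
  Funk C p q + ln al - ln be <= Funk C (al *: p) (be *: q).
Proof.
move=> Dp Dq [l' Sl'] al0 be0.
have Sback : forall l, Sf (al *: p) (be *: q) l -> Sf p q (l * be / al).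
  move=> l [l0 Cl]; split; first by rewrite divr_gt0 // mulr_gt0.
  have -> : (l * be / al) *: q - p = al^-1 *: (l *: (be *: q) - al *: p).
    apply/rowP => i; rewrite !mxE; field; exact: lt0r_neq0.
  by apply: CZ => //; rewrite invr_ge0 ltW.
have S2 : Sf (al *: p) (be *: q) (l' * al / be).
  case: Sl' => l0 Cl; split; first by rewrite divr_gt0 // mulr_gt0.
  have -> : (l' * al / be) *: (be *: q) - al *: p = al *: (l' *: q - p).
    apply/rowP => i; rewrite !mxE; field; exact: lt0r_neq0.
  by apply: CZ => //; exact: ltW.
set I := inf (Sf p q); set J := inf (Sf (al *: p) (be *: q)).
have I1 : 1 <= I by apply: infS_ge1 => //; exists l'.
have I0 : 0 < I by exact: lt_le_trans ltr01 I1.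
have key : al / be * I <= J.
  apply: lb_le_inf; first by exists (l' * al / be).
  move=> l Sl; have := infS_le (Sback l Sl); rewrite -/I => h.
  rewrite -ler_pdivlMl ?divr_gt0 //.
  apply: le_trans h _; rewrite le_eqVlt; apply/orP; left; apply/eqP; field; by rewrite !lt0r_neq0.
have J0 : 0 < J by apply: lt_le_trans key; rewrite !mulr_gt0 ?invr_gt0.
rewrite !FunkE -/I -/J.
have -> : ln I + ln al - ln be = ln (al / be * I).
  rewrite lnM ?posrE ?divr_gt0 // ln_div ?posrE //; ring.
have P1 : al / be * I \is Num.pos by rewrite posrE mulr_gt0 // divr_gt0.
have P2 : J \is Num.pos by rewrite posrE.
by rewrite (ler_ln P1 P2).
Qed.

Lemma relint_line c w : relint Del c -> Del w ->
  exists2 eps : R, 0 < eps & forall tau : R, `|tau| * `|w - c| < eps -> Del (c + tau *: (w - c)).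
Proof.
move=> [Dc [eps eps0 H]] Dw; exists eps => // tau htau; apply: H.
  by move=> A Aaff sub; apply: Aaff; apply: sub.
rewrite -ball_normE /ball_ /= opprD addrA subrr add0r normrN normrZ //.
Qed.

Lemma S_nonempty x y : Del x -> relint Del y -> Sf x y !=set0.
Proof.
move=> Dx Ry; have [eps eps0 H] := relint_line Ry Dx.
set t := eps / (`|x - y| + 1).
have t0 : 0 < t by rewrite divr_gt0 // ltr_wpDl.
have hz : Del (y + (- t) *: (x - y)).
  have N0 : 0 < `|x - y| + 1 by rewrite ltr_wpDl.
  apply: H; rewrite normrN gtr0_norm // /t mulrAC ltr_pdivrMr //.
  by rewrite ltr_pM2l // ltrDl.
exists ((1 + t) / t); split; first by rewrite divr_gt0 // addr_gt0.
have -> : ((1 + t) / t) *: y - x = t^-1 *: (y + (- t) *: (x - y)).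
  apply/rowP => i; rewrite !mxE; field; exact: lt0r_neq0.
by apply: CZ; [rewrite invr_ge0 ltW | case: hz].
Qed.

End Cone.

Section Geo.
Variables (R : realType) (n : nat) (C : set 'rV[R]_n) (e : 'rV[R]_n) (K : set 'rV[R]_n).
Local Notation V := 'rV[R]_n.
Hypothesis Ccl : closed C.
Hypothesis Ccone : is_convex_cone C.
Hypothesis Cint : interior C !=set0.
Hypothesis eint : interior (dual_cone C) e.
Hypothesis Kcl : closed K.
Hypothesis Kcone : is_cone K.
Hypothesis KC : K `<=` C.
Local Notation Del := (simplex C e).
Let X := K `&` Del.
Hypothesis Xrel : X `<=` relint Del.
Hypothesis X0 : X !=set0.

Lemma eC : dual_cone C e.
Proof. exact: interior_subset. Qed.

Lemma intC_ball p : interior C p -> exists2 r : R, 0 < r & forall q, `|p - q| < r -> C q.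
Proof.
move=> /nbhs_ballP [r r0 hr]; exists r => // q hq; apply: hr.
by rewrite -ball_normE.
Qed.

Lemma ball_intC p r : 0 < r -> (forall q, `|p - q| < r -> C q) -> interior C p.
Proof.
move=> r0 hr; apply/nbhs_ballP; exists r => // q; rewrite -ball_normE; exact: hr.
Qed.

Lemma intC_pos p : interior C p -> 0 < dotp p e.
Proof.
move=> /intC_ball [r r0 hr]; have [x0 [_ [Cx0 ex0]]] := X0.
set t := r / (`|x0| + 1).
have N0 : 0 < `|x0| + 1 by rewrite ltr_wpDl.
have t0 : 0 < t by rewrite divr_gt0.
have : C (p - t *: x0).
  apply: hr; rewrite opprB addrC subrK normrZ gtr0_norm // /t mulrAC ltr_pdivrMr //.
  by rewrite ltr_pM2l // ltrDl.
move=> /eC; rewrite dotpB dotpZ ex0 mulr1 subr_ge0 => h.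
exact: lt_le_trans h.
Qed.

Lemma intC_scale p s : interior C p -> 0 < s -> interior C (s *: p).
Proof.
move=> /intC_ball [r r0 hr] s0; apply: (@ball_intC _ (s * r)); first exact: mulr_gt0.
move=> q hq.
have -> : q = s *: (s^-1 *: q) by rewrite scalerA mulfV ?lt0r_neq0 // scale1r.
apply: (CZ Ccone) => //; first exact: ltW.
apply: hr.
have -> : p - s^-1 *: q = s^-1 *: (s *: p - q).
  by apply/rowP => i; rewrite !mxE; field; rewrite lt0r_neq0.
by rewrite normrZ gtr0_norm ?invr_gt0 // ltr_pdivrMl.
Qed.

Lemma intC_add u p : C u -> interior C p -> interior C (u + p).
Proof.
move=> Cu /intC_ball [r r0 hr]; apply: (ball_intC r0) => q hq.
have -> : q = u + (q - u) by rewrite addrC subrK.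
apply: (CD Ccone) => //; apply: hr.
by have -> : p - (q - u) = u + p - q by apply/rowP => i; rewrite !mxE; ring.
Qed.

Lemma Xint x : X x -> interior C x.
Proof.
move=> Xx; have [c Cc] := Cint.
have g0 := intC_pos Cc.
set c' := (dotp c e)^-1 *: c.
have c'int : interior C c' by apply: intC_scale => //; rewrite invr_gt0.
have Dc' : Del c'.
  split; first exact: interior_subset.
  by rewrite /c' dotpZ mulVf // lt0r_neq0.
have [eps eps0 H] := relint_line (Xrel Xx) Dc'.
set t := eps / (`|c' - x| + 1).
have N0 : 0 < `|c' - x| + 1 by rewrite ltr_wpDl.
have t0 : 0 < t by rewrite divr_gt0.
have [Cz _] : Del (x + (- t) *: (c' - x)).
  apply: H; rewrite normrN gtr0_norm // /t mulrAC ltr_pdivrMr //.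
  by rewrite ltr_pM2l // ltrDl.
have t1 : 0 < 1 + t by rewrite addr_gt0.
have t1' : 1 + t != 0 by rewrite lt0r_neq0.
have -> : x = (1 + t)^-1 *: (x + (- t) *: (c' - x)) + (t / (1 + t)) *: c'.
  have gn : dotp c e != 0 by rewrite lt0r_neq0.
  by apply/rowP => i; rewrite !mxE; field; rewrite gn t1'.
apply: intC_add; first by apply: (CZ Ccone) => //; rewrite invr_ge0 ltW.
by apply: intC_scale => //; rewrite divr_gt0.
Qed.

Definition nrm (p : V) := (dotp p e)^-1 *: p.

Lemma nrmX p : interior C p -> K p -> X (nrm p).
Proof.
move=> pint Kp; have g0 := intC_pos pint.
split; first by case: Kcone => _ h; apply: h => //; rewrite invr_ge0 ltW.
split; first by apply: (CZ Ccone) => //; [rewrite invr_ge0 ltW | exact: interior_subset].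
by rewrite /nrm dotpZ mulVf // lt0r_neq0.
Qed.

Lemma nrmK p : interior C p -> dotp p e *: nrm p = p.
Proof.
move=> pint; have g0 := intC_pos pint.
by rewrite /nrm scalerA mulfV ?lt0r_neq0 // scale1r.
Qed.

Lemma SX x y : X x -> X y -> Sf C x y !=set0.
Proof. by move=> [_ Dx] Yy; apply: (@S_nonempty _ _ _ e Ccone) => //; exact: (Xrel Yy). Qed.

Lemma FunkX_ge0 x y : X x -> X y -> 0 <= Funk C x y.
Proof. by move=> [_ Dx] [_ Dy]; exact: (Funk_ge0 eC). Qed.

Lemma FunkX_xx x : X x -> Funk C x x = 0.
Proof. by move=> [_ Dx]; exact: (Funk_xx Ccone eC). Qed.

Lemma FunkX_tri x y z : X x -> X y -> X z -> Funk C x z <= Funk C x y + Funk C y z.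
Proof.
move=> Xx Xy Xz; case: (Xx) => _ Dx; case: (Xy) => _ Dy; case: (Xz) => _ Dz.
apply: (Funk_tri Ccone eC) => //; exact: SX.
Qed.

Lemma relint_line2 c : relint Del c ->
  exists2 eps : R, 0 < eps & forall w (tau : R), Del w -> `|tau| * `|w - c| < eps -> Del (c + tau *: (w - c)).
Proof.
move=> [Dc [eps eps0 H]]; exists eps => // w tau Dw htau; apply: H.
  by move=> A Aaff sub; apply: Aaff; apply: sub.
rewrite -ball_normE /ball_ /= opprD addrA subrr add0r normrN normrZ //.
Qed.

Lemma Funk_local x eps : X x -> 0 < eps -> exists2 r : R, 0 < r &
  forall y, X y -> `|x - y| < r -> Funk C x y <= eps /\ Funk C y x <= eps.
Proof.
move=> Xx eps0; have [del del0 H] := relint_line2 (Xrel Xx).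
set t0 := 1 + eps^-1.
have t00 : 0 < t0 by rewrite addr_gt0 // invr_gt0.
exists (del / t0); first exact: divr_gt0.
move=> y Xy hxy; case: (Xx) => _ Dx; case: (Xy) => _ Dy.
have ht : forall tau, `|tau| = t0 -> Del (x + tau *: (y - x)).
  move=> tau ht; apply: H => //; rewrite ht distrC -ltr_pdivlMl // mulrC; exact: hxy.
split.
  have [Cz _] := ht t0 (gtr0_norm t00).
  apply: le_trans (_ : ln (1 + eps) <= _); last by apply: le_ln1Dx; rewrite (lt_trans _ eps0) // ltrN10.
  apply: (Funk_le eC) => //; split; first by rewrite addr_gt0.
  have -> : (1 + eps) *: y - x = eps *: (x + t0 *: (y - x)).
    by apply/rowP => i; rewrite !mxE /t0; field; rewrite lt0r_neq0.
  by apply: (CZ Ccone) => //; exact: ltW.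
have [Cz _] := ht (- t0) ltac:(by rewrite normrN gtr0_norm).
apply: le_trans (_ : ln (1 + t0^-1) <= _).
  apply: (Funk_le eC) => //; split; first by rewrite addr_gt0 // invr_gt0.
  have -> : (1 + t0^-1) *: x - y = t0^-1 *: (x + (- t0) *: (y - x)).
    by apply/rowP => i; rewrite !mxE; field; rewrite lt0r_neq0.
  by apply: (CZ Ccone) => //; rewrite invr_ge0 ltW.
have ti : 0 < t0^-1 by rewrite invr_gt0.
apply: le_trans (_ : t0^-1 <= _); first by apply: le_ln1Dx; exact: lt_trans (ltrN10 R) ti.
rewrite -[t0^-1]mul1r ler_pdivrMr // /t0 mulrDr mulr1 mulfV ?lt0r_neq0 // lerDr; exact: ltW.
Qed.


Lemma dotpDr (x y z : V) : dotp x (y + z) = dotp x y + dotp x z.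
Proof. by rewrite /dotp -big_split; apply: eq_bigr => i _; rewrite !mxE mulrDr. Qed.
Lemma dotpZr a (x z : V) : dotp x (a *: z) = a * dotp x z.
Proof. by rewrite /dotp mulr_sumr; apply: eq_bigr => i _; rewrite !mxE mulrCA. Qed.

Lemma dotp_cont : continuous (fun p : V => dotp p e).
Proof.
have : forall s : seq 'I_n, continuous (fun p : V => \sum_(i <- s) p ord0 i * e ord0 i).
  elim => [|i s IH].
    by under eq_fun do rewrite big_nil; exact: cst_continuous.
  under eq_fun do rewrite big_cons.
  move=> p; apply: (@continuousD _ _ _ (fun p : V => p ord0 i * e ord0 i)
     (fun p : V => \sum_(j <- s) p ord0 j * e ord0 j)); last exact: IH.
  apply: (@continuousM _ _ (fun p : V => p ord0 i) (fun=> e ord0 i)).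
    exact: coord_continuous.
  exact: cst_continuous.
by move=> h; exact: h.
Qed.

Lemma Xbox : exists M : R, forall x, X x -> forall i, `|x ord0 i| <= M.
Proof.
have /nbhs_ballP [r r0 hr] := eint.
set s := r / 2.
have s0 : 0 < s by rewrite divr_gt0.
exists s^-1 => x [_ [Cx ex]] i.
set d := \row_(j < n) ((j == i)%:R : R).
have dx : dotp x d = x ord0 i.
  rewrite /dotp (bigD1 i) //= big1 ?addr0; first by rewrite mxE eqxx mulr1.
  by move=> j /negbTE ji; rewrite mxE ji mulr0.
have inb : forall t : R, `|t| <= s -> dual_cone C (e + t *: d).
  move=> t ht; apply: hr; split => // a b; rewrite !mxE /ball /=.
  rewrite opprD addrA subrr add0r normrN normrM.
  apply: le_lt_trans (_ : `|t| * 1 < _).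
    by rewrite ler_wpM2l // /d; case: (b == i); rewrite normr_nat ?ler01.
  by rewrite mulr1 (le_lt_trans ht) // /s ltr_pdivrMr // ltr_pMr // ltr1n.
have a1 : 0 <= 1 + s * x ord0 i.
  have := inb s ltac:(by rewrite gtr0_norm) x Cx.
  by rewrite dotpDr dotpZr ex dx.
have a2 : 0 <= 1 - s * x ord0 i.
  have := inb (- s) ltac:(by rewrite normrN gtr0_norm) x Cx.
  by rewrite dotpDr dotpZr ex dx mulNr.
rewrite ler_norml; apply/andP; split; rewrite -(ler_pM2l s0) ?mulrN mulfV ?lt0r_neq0 //; lra.
Qed.


Lemma Xclosed : closed X.
Proof.
apply: closedI => //; apply: closedI => //.
apply: (@preimage_closed _ _ (fun p : V => dotp p e) [set 1]).
  by move=> p _; exact: dotp_cont.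
exact: closed_eq.
Qed.

Lemma Xcompact : compact X.
Proof.
have [M hM] := Xbox.
have Mnco : compact [set v : 'rV[R]_n | forall i, v ord0 i \in `[(- M), M]].
  apply: (@rV_compact _ _ (fun=> `[(- M), M]%classic)).
  by move=> _; apply: segment_compact.
apply: subclosed_compact Xclosed Mnco _.
by move=> x Xx i /=; rewrite in_itv /= -ler_norml; exact: hM.
Qed.

Lemma Xnet (eps : R) : 0 < eps -> exists (m : nat) (p : nat -> V),
  (forall i, (i < m)%N -> X (p i)) /\
  (forall x, X x -> exists2 i, (i < m)%N & Funk C x (p i) <= eps /\ Funk C (p i) x <= eps).
Proof.
move=> eps0.
pose f := fun x : V => [set y | exists2 r : R, 0 < r & `|x - y| < r /\
   forall z, X z -> `|x - z| < r -> Funk C x z <= eps /\ Funk C z x <= eps].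
have fo : forall x, X x -> open (f x).
  move=> x _; rewrite openE => y [r r0 [hy good]].
  apply/nbhs_ballP; exists (r - `|x - y|); first by rewrite /= subr_gt0.
  move=> z; rewrite -ball_normE /ball_ /= => hz; exists r => //; split => //.
  have := ler_normD (x - y) (y - z); rewrite addrA subrK => h.
  apply: le_lt_trans h _; lra.
have cov : X `<=` cover X f.
  move=> x Xx; exists x => //.
  have [r r0 hr] := Funk_local Xx eps0.
  by exists r => //; split => //; rewrite subrr normr0.
have := Xcompact; rewrite compact_cover => /(_ V X f fo cov) [D' sub hD'].
exists (size (finmap.enum_fset D')), (fun i => nth 0 (finmap.enum_fset D') i); split.
  by move=> i im; rewrite -in_setE; apply: sub; exact: mem_nth.
move=> x Xx; have [x' Dx' [r r0 [hx good]]] := hD' x Xx.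
have Dx'' : x' \in (finmap.enum_fset D') by exact: Dx'.
exists (index x' (finmap.enum_fset D')); first by rewrite index_mem.
rewrite nth_index //; have [h1 h2] := good x Xx hx; split => //.
Qed.

Lemma finbnd1 (g : nat -> R) m : exists M, forall i, (i < m)%N -> g i <= M.
Proof.
elim: m => [|m [M hM]]; first by exists 0.
exists (Num.max M (g m)) => i; rewrite ltnS leq_eqVlt => /orP[/eqP->|im].
  by rewrite le_max lexx orbT.
by rewrite le_max hM.
Qed.

Lemma finbnd2 (g : nat -> nat -> R) m : exists M, forall i j, (i < m)%N -> (j < m)%N -> g i j <= M.
Proof.
have [M hM] := finbnd1 (fun i => \sum_(k < m) `|g i k|) m.
exists M => i j im jm; apply: le_trans (hM i im).
apply: le_trans (ler_norm _) _.
rewrite (bigD1 (Ordinal jm)) //= lerDl.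
by apply: sumr_ge0 => k _.
Qed.

Lemma Dbound : exists D, forall x y, X x -> X y -> Funk C x y <= D.
Proof.
have [m [p [Xp hp]]] := Xnet ltr01.
have [M hM] := finbnd2 (fun i j => Funk C (p i) (p j)) m.
exists (1 + M + 1) => x y Xx Xy.
have [i im [hi1 hi2]] := hp x Xx.
have [j jm [hj1 hj2]] := hp y Xy.
have t1 := FunkX_tri Xx (Xp i im) Xy.
have t2 := FunkX_tri (Xp i im) (Xp j jm) Xy.
have := hM i j im jm; lra.
Qed.


Lemma cbnd (S : set R) : compact S -> exists M, forall y, S y -> `|y| <= M.
Proof.
move=> /(@compact_bounded R R^o) [M0 [_ HM]].
exists (M0 + 1) => y Sy; apply: (HM (M0 + 1)) => //.
by rewrite ltrDl.
Qed.

Variables (TA TB : topologicalType) (Aset : set TA) (Bset : set TB) (T : TA -> TB -> V -> V).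
Hypothesis A0 : Aset !=set0.
Hypothesis B0 : Bset !=set0.
Hypothesis Tint : forall a b x, Aset a -> Bset b -> interior C x -> interior C (T a b x).
Hypothesis Tfunk : forall a b x y, Aset a -> Bset b -> interior C x -> interior C y ->
     Funk C (T a b x) (T a b y) <= Funk C x y.
Hypothesis Tcomp : forall Kc : set V, compact Kc -> Kc `<=` interior C ->
     compact [set T p.1.1 p.1.2 p.2 | p in (Aset `*` Bset) `*` Kc].
Hypothesis TK : forall a b x, Aset a -> Bset b -> K x -> K (T a b x).

Lemma TXint a b x : Aset a -> Bset b -> X x -> interior C (T a b x).
Proof. by move=> Aa Bb Xx; apply: Tint => //; exact: Xint. Qed.

Lemma TXnrm a b x : Aset a -> Bset b -> X x -> X (nrm (T a b x)).
Proof.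
move=> Aa Bb Xx; apply: nrmX; first exact: TXint.
by apply: TK => //; case: Xx.
Qed.

Lemma Tbnd x : X x -> exists L U, forall a b, Aset a -> Bset b ->
  L <= ln (dotp (T a b x) e) <= U.
Proof.
move=> Xx.
pose P := [set T p.1.1 p.1.2 p.2 | p in (Aset `*` Bset) `*` [set x]].
have Pc : compact P.
  by apply: Tcomp; [exact: compact_set1 | move=> y ->; exact: Xint].
have Pint : forall q, P q -> interior C q.
  by move=> q [[[a b] y] [[/= Aa Bb] ->] <-]; exact: TXint.
have [U0 hU] : exists U0, forall q, P q -> `|dotp q e| <= U0.
  have := @continuous_compact _ _ (fun q : V => dotp q e) P (continuous_subspaceT dotp_cont) Pc.
  move=> /cbnd [M hM]; exists M => q Pq; apply: hM; by exists q.
have [L0 hL] : exists L0, forall q, P q -> `|(dotp q e)^-1| <= L0.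
  have hc : {within P, continuous (fun q : V => (dotp q e)^-1)}.
    apply: continuous_in_subspaceT => q; rewrite inE => Pq.
    have hq : dotp q e != 0 by rewrite lt0r_neq0 //; exact: intC_pos (Pint q Pq).
    exact: (continuous_comp (@dotp_cont q) (inv_continuous hq)).
  have := @continuous_compact _ _ (fun q : V => (dotp q e)^-1) P hc Pc.
  move=> /cbnd [M hM]; exists M => q Pq; apply: hM; by exists q.
have [a0 Aa0] := A0; have [b0 Bb0] := B0.
have Pq0 : P (T a0 b0 x) by exists (a0, b0, x).
have g00 := intC_pos (Pint _ Pq0).
have L00 : 0 < L0.
  apply: lt_le_trans (hL _ Pq0); rewrite normr_gt0 invr_neq0 // lt0r_neq0 //.
have U00 : 0 < U0 by apply: lt_le_trans (hU _ Pq0); rewrite normr_gt0 lt0r_neq0.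
exists (ln L0^-1), (ln U0) => a b Aa Bb.
have Pq : P (T a b x) by exists (a, b, x).
have g0 := intC_pos (Pint _ Pq).
have h1 := hU _ Pq; have h2 := hL _ Pq.
rewrite gtr0_norm // in h1; rewrite gtr0_norm ?invr_gt0 // in h2.
apply/andP; split; rewrite ler_ln ?posrE ?invr_gt0 //.
rewrite -[(dotp (T a b x) e)^-1]mul1r ler_pdivrMr // in h2.
by rewrite -[L0^-1]mul1r ler_pdivrMr // mulrC.
Qed.

Lemma lipbnd (Y : set V) (w : V -> R) y0 : Y `<=` X -> Y y0 -> Lipd Y (Funk C) w ->
  exists m M, forall y, Y y -> m <= w y <= M.
Proof.
move=> YX Yy0 hw; have [D hD] := Dbound.
exists (w y0 - D), (w y0 + D) => y Yy.
have := hw y y0 Yy Yy0; have := hw y0 y Yy0 Yy.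
have := hD y y0 (YX _ Yy) (YX _ Yy0); have := hD y0 y (YX _ Yy0) (YX _ Yy).
move=> *; apply/andP; split; lra.
Qed.

Local Notation LipX := (Lipd X (Funk C)).
Local Notation FF := (Fop Aset Bset T e).

Lemma gbnd v x : LipX v -> X x -> exists L U, forall a b, Aset a -> Bset b ->
  L <= ln (dotp (T a b x) e) + v ((dotp (T a b x) e)^-1 *: T a b x) <= U.
Proof.
move=> hv Xx; have [x0 Xx0] := X0.
have [m [M hm]] := lipbnd (@subset_refl _ X) Xx0 hv.
have [L [U hLU]] := Tbnd Xx.
exists (L + m), (U + M) => a b Aa Bb.
have /andP[h1 h2] := hLU a b Aa Bb.
have /andP[h3 h4] := hm _ (TXnrm Aa Bb Xx).
rewrite /nrm in h3 h4.
apply/andP; split; lra.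
Qed.

Lemma F_lip v : LipX v -> LipX (FF v).
Proof.
move=> hv x y Xx Xy; rewrite lerBlDr addrC.
have [L1 [U1 h1]] := gbnd hv Xx.
have [L2 [U2 h2]] := gbnd hv Xy.
apply: (infsup_le A0 B0 h1 h2) => a b Aa Bb.
have pint := TXint Aa Bb Xx; have qint := TXint Aa Bb Xy.
have al0 := intC_pos pint; have be0 := intC_pos qint.
have Xp := TXnrm Aa Bb Xx; have Xq := TXnrm Aa Bb Xy.
have hl := hv _ _ Xp Xq.
have hs := Funk_scale Ccone eC (proj2 Xp) (proj2 Xq) (SX Xp Xq) al0 be0.
rewrite !nrmK // in hs.
have ht := Tfunk Aa Bb (Xint Xx) (Xint Xy).
rewrite /nrm in hl hs; lra.
Qed.

Lemma F_mono v w : LipX v -> LipX w -> (forall x, X x -> v x <= w x) ->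
  forall x, X x -> FF v x <= FF w x.
Proof.
move=> hv hw hvw x Xx; rewrite -[FF w x]addr0.
have [L1 [U1 h1]] := gbnd hv Xx.
have [L2 [U2 h2]] := gbnd hw Xx.
apply: (infsup_le A0 B0 h1 h2) => a b Aa Bb.
rewrite addr0 lerD2l; exact: hvw (TXnrm Aa Bb Xx).
Qed.

Lemma F_shift v c : LipX v -> forall x, X x -> FF (fun z => v z + c) x = FF v x + c.
Proof.
move=> hv x Xx.
have hv' : LipX (fun z => v z + c) by apply: lip_shift.
have [L1 [U1 h1]] := gbnd hv Xx.
have [L2 [U2 h2]] := gbnd hv' Xx.
apply/le_anti/andP; split.
  apply: (infsup_le A0 B0 h2 h1) => a b Aa Bb /=; lra.
rewrite -lerBrDr.
apply: (infsup_le A0 B0 h1 h2) => a b Aa Bb /=; lra.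
Qed.


Variable Xh : set V.
Hypothesis XhX : Xh `<=` X.
Hypothesis Xh0 : Xh !=set0.
Hypothesis Xhfin : finite_set Xh.
Local Notation LipH := (Lipd Xh (Funk C)).

Lemma Ip_lb w x : LipH w -> X x -> exists m, forall y, Xh y -> m <= w y + Funk C x y.
Proof.
move=> hw Xx; have [y0 Xy0] := Xh0.
have [m [M hm]] := lipbnd XhX Xy0 hw.
exists m => y Xy; have /andP[h1 _] := hm y Xy.
have := FunkX_ge0 Xx (XhX Xy); lra.
Qed.

Lemma Ip_lip w : LipH w -> LipX (Iplus C Xh w).
Proof.
move=> hw x x' Xx Xx'; rewrite lerBlDr addrC -lerBlDr.
apply: inf_img_ge => // y Xy.
have [m hm] := Ip_lb hw Xx.
have h1 := @inf_img_lb R V Xh (fun y => w y + Funk C x y) m hm y Xy.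
have h2 := FunkX_tri Xx Xx' (XhX Xy).
rewrite /Iplus; simpl in h1; lra.
Qed.

Lemma Ip_mono w w' : LipH w -> LipH w' -> (forall y, Xh y -> w y <= w' y) ->
  forall x, X x -> Iplus C Xh w x <= Iplus C Xh w' x.
Proof.
move=> hw hw' hww x Xx; apply: inf_img_ge => // y Xy.
have [m hm] := Ip_lb hw Xx.
have h1 := @inf_img_lb R V Xh (fun y => w y + Funk C x y) m hm y Xy.
have := hww y Xy; rewrite /Iplus; simpl in h1; lra.
Qed.

Lemma Ip_shift w c : LipH w -> forall x, X x ->
  Iplus C Xh (fun z => w z + c) x = Iplus C Xh w x + c.
Proof.
move=> hw x Xx; have [m hm] := Ip_lb hw Xx.
apply/le_anti/andP; split.
  rewrite -lerBlDr; apply: inf_img_ge => // y Xy.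
  have h1 := @inf_img_lb R V Xh (fun y => w y + c + Funk C x y) (m + c)
     (fun y Xy => ltac:(have := hm y Xy; lra)) y Xy.
  rewrite /Iplus; simpl in h1; lra.
apply: inf_img_ge => // y Xy.
have h1 := @inf_img_lb R V Xh (fun y => w y + Funk C x y) m hm y Xy.
rewrite /Iplus; simpl in h1; lra.
Qed.

Lemma Ip_ext w w' : (forall y, Xh y -> w y = w' y) -> Iplus C Xh w = Iplus C Xh w'.
Proof.
move=> h; apply: funext => x; rewrite /Iplus; congr inf.
by apply: eq_imagel => y Xy /=; rewrite h.
Qed.

Lemma Xhnet (eps : R) : 0 < eps -> exists (m : nat) (p : nat -> V),
  (forall i, (i < m)%N -> Xh (p i)) /\
  (forall x, Xh x -> exists2 i, (i < m)%N & Funk C x (p i) <= eps /\ Funk C (p i) x <= eps).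
Proof.
move=> eps0; have [F hF] := finite_fsetP.1 Xhfin.
exists (size (finmap.enum_fset F)), (fun i => nth 0 (finmap.enum_fset F) i); split.
  by move=> i im; rewrite hF /=; exact: mem_nth.
move=> x Xx.
have xF : x \in finmap.enum_fset F by move: Xx; rewrite hF.
exists (index x (finmap.enum_fset F)); first by rewrite index_mem.
by rewrite nth_index // FunkX_xx ?ltW //; exact: XhX.
Qed.

Lemma dlike (Y : set V) v : Y `<=` X -> Y !=set0 -> Lipd Y (Funk C) v -> distance_like C Y v.
Proof.
move=> YX [y0 Yy0] hv; have [D hD] := Dbound.
have [m [M hm]] := lipbnd YX Yy0 hv.
exists y0 => //; exists (m - D) => x Yx.
have := hD x y0 (YX _ Yx) (YX _ Yy0); have /andP[h1 _] := hm x Yx; lra.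
Qed.

Lemma FF_ext f g : LipX f -> LipX g -> (forall x, X x -> f x = g x) ->
  forall x, X x -> FF f x = FF g x.
Proof.
move=> hf hg hfg x Xx; apply/le_anti/andP; split; apply: F_mono => // y Xy; by rewrite hfg.
Qed.

Lemma main_res :
  [/\ (exists (lam : R) (v : V -> R),
         [/\ LipX v, distance_like C X v &
             forall x, X x -> FF v x = lam + v x]),
      (exists (lam : R) (v : V -> R),
         [/\ LipX v, distance_like C X v &
             forall x, X x -> FF (Iplus C Xh v) x = lam + v x]) &
      (exists (lam : R) (v : V -> R),
         [/\ LipH v, distance_like C Xh v &
             forall y, Xh y -> FF (Iplus C Xh v) y = lam + v y])].
Proof.
have [x0 Xx0] := X0.
have [D hD] := Dbound.
have dge0 : forall x y, X x -> X y -> 0 <= Funk C x y by move=> *; exact: FunkX_ge0.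
have p1 : exists (lam : R) (v : V -> R),
         [/\ LipX v, distance_like C X v & forall x, X x -> FF v x = lam + v x].
  have [lam [v [lv hv]]] := @eigen_exists R V X (Funk C) D x0 Xx0 dge0 hD Xnet FF
    F_lip F_mono F_shift.
  exists lam, v; split => //; apply: dlike => //; exists x0.
have hG1 : forall w, LipH w -> LipH (FF (Iplus C Xh w)).
  by move=> w hw x y Xx Xy; apply: F_lip; [exact: Ip_lip | exact: XhX | exact: XhX].
have hG2 : forall f g, LipH f -> LipH g -> (forall x, Xh x -> f x <= g x) ->
    forall x, Xh x -> FF (Iplus C Xh f) x <= FF (Iplus C Xh g) x.
  move=> f g hf hg hfg x Xx; apply: F_mono; [exact: Ip_lip | exact: Ip_lip | | exact: XhX].
  by move=> y Xy; apply: Ip_mono.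
have hG3 : forall f c, LipH f -> forall x, Xh x ->
    FF (Iplus C Xh (fun z => f z + c)) x = FF (Iplus C Xh f) x + c.
  move=> f c hf x Xx.
  rewrite -F_shift; [|exact: Ip_lip|exact: XhX].
  apply: FF_ext; [apply: Ip_lip; exact: lip_shift | apply: lip_shift; exact: Ip_lip | | exact: XhX].
  by move=> y Xy; apply: Ip_shift.
have [y0 Xy0] := Xh0.
have [lam [w [lw hw]]] := @eigen_exists R V Xh (Funk C) D y0 Xy0
   (fun x y Xx Xy => dge0 x y (XhX Xx) (XhX Xy)) (fun x y Xx Xy => hD x y (XhX Xx) (XhX Xy))
   Xhnet (fun w => FF (Iplus C Xh w)) hG1 hG2 hG3.
have p3 : exists (lam : R) (v : V -> R),
         [/\ LipH v, distance_like C Xh v & forall y, Xh y -> FF (Iplus C Xh v) y = lam + v y].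
  by exists lam, w; split => //; apply: dlike.
split => //.
pose v := fun x => FF (Iplus C Xh w) x - lam.
have lv : LipX v by apply: lip_shift; apply: F_lip; exact: Ip_lip.
exists lam, v; split => //; first by apply: dlike.
move=> x Xx.
have -> : Iplus C Xh v = Iplus C Xh w.
  by apply: Ip_ext => y Xy; rewrite /v hw //; ring.
rewrite /v; ring.
Qed.

End Geo.

Theorem corollary2 (R : realType) (n : nat) (C : set 'rV[R]_n) (e : 'rV[R]_n)
  (TA TB : topologicalType) (Aset : set TA) (Bset : set TB)
  (T : TA -> TB -> 'rV[R]_n -> 'rV[R]_n)
  (K : set 'rV[R]_n) (h : R) (Xh : set 'rV[R]_n) :
  closed C -> is_convex_cone C -> pointed C -> interior C !=set0 ->
  interior (dual_cone C) e ->
  compact Aset -> Aset !=set0 -> compact Bset -> Bset !=set0 ->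
  (forall a b x, Aset a -> Bset b -> interior C x -> interior C (T a b x)) ->
  (forall a b x y, Aset a -> Bset b -> interior C x -> interior C y ->
     Funk C (T a b x) (T a b y) <= Funk C x y) ->
  (forall b x, Bset b -> interior C x ->
     {within Aset, continuous (fun a => T a b x)}) ->
  (forall a x, Aset a -> interior C x ->
     {within Bset, continuous (fun b => T a b x)}) ->
  (forall Kc : set 'rV[R]_n, compact Kc -> Kc `<=` interior C ->
     compact [set T p.1.1 p.1.2 p.2 | p in (Aset `*` Bset) `*` Kc]) ->
  (forall a b, Aset a -> Bset b -> {within C, continuous (T a b)}) ->
  closed K -> is_cone K -> K `<=` C ->
  (forall a b x, Aset a -> Bset b -> K x -> K (T a b x)) ->
  let X := K `&` simplex C e in
  X `<=` relint (simplex C e) -> X !=set0 ->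
  0 < h -> finite_set Xh -> Xh `<=` X ->
  X `<=` \bigcup_(y in Xh) [set x | Hil C x y < h] ->
  [/\ (exists (lam : R) (v : 'rV[R]_n -> R),
         [/\ Lip1 C X v, distance_like C X v &
             forall x, X x -> Fop Aset Bset T e v x = lam + v x]),
      (exists (lam : R) (v : 'rV[R]_n -> R),
         [/\ Lip1 C X v, distance_like C X v &
             forall x, X x -> Fop Aset Bset T e (Iplus C Xh v) x = lam + v x]) &
      (exists (lam : R) (v : 'rV[R]_n -> R),
         [/\ Lip1 C Xh v, distance_like C Xh v &
             forall y, Xh y -> Fop Aset Bset T e (Iplus C Xh v) y = lam + v y])].
Proof.
move=> Ccl Ccone Cpt Cint eint Acomp A0 Bcomp B0 Tint Tfunk Tca Tcb Tcomp Tcont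
  Kcl Kcone KC TK X Xrel X0 h0 Xhfin XhX Xcov.
have Xh0 : Xh !=set0.
  by have [x Xx] := X0; have [y Xy _] := Xcov x Xx; exists y.
apply: main_res => //.
Qed.
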